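(* For any directed hypergraph with a directed hypergraph cellular sheaf (any charge $q\in\mathbb R$, stalk dimension $d$) such that every $D_u$ is positive definite, the normalized Directed Sheaf Hypergraph Laplacian $L^{\vec{\mathcal F}}_N$ is positive semidefinite.
   Context: A directed hypergraph is $\mathcal H=(V,E)$ with $n=|V|$, $m=|E|$, each hyperedge $e\in E$ a nonempty subset of $V$ partitioned into disjoint sets $T(e)$ (tail) and $H(e)$ (head) with $e=T(e)\cup H(e)$; $\delta_e:=|e|$. A directed hypergraph cellular sheaf with charge $q\in\mathbb R$ and stalk dimension $d$ consists of: for each $e\in E$, $u\in V$, the scalar $\mathcal S^{(q)}_{u\trianglelefteq e}=1$ if $u\in H(e)$, $=e^{-2\pi\mathbf i q}$ if $u\in T(e)$, $=0$ otherwise; for each incidence $u\in e$ a real matrix $\mathcal F_{u\trianglelefteq e}\in\mathbb R^{d\times d}$ and $\vec{\mathcal F}_{u\trianglelefteq e}:=\mathcal S^{(q)}_{u\trianglelefteq e}\mathcal F_{u\trianglelefteq e}$. Let $B^{(q)}\in\mathbb C^{md\times nd}$ have $d\times d$ block $(e,u)$ equal to $\vec{\mathcal F}_{u\trianglelefteq e}$ if $u\in e$ and $0$ otherwise; $D_E=\mathrm{diag}(\delta_1I_d,\dots,\delta_mI_d)$; $D_u:=\sum_{e\ni u}\mathcal F_{u\trianglelefteq e}^\top\mathcal F_{u\trianglelefteq e}$; $D_V=\mathrm{diag}(D_1,\dots,D_n)$. $L^{\vec{\mathcal F}}:=D_V-(B^{(q)})^\dagger D_E^{-1}B^{(q)}$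 and $L^{\vec{\mathcal F}}_N:=D_V^{-1/2}L^{\vec{\mathcal F}}D_V^{-1/2}$. *)

(* Defs.v *)
From HB Require Import structures.
From mathcomp Require Import all_boot all_order all_algebra.
From mathcomp Require Import complex.
From mathcomp Require Import boolp classical_sets reals trigo.
Set Implicit Arguments. Unset Strict Implicit. Unset Printing Implicit Defensive.
Import Order.TTheory GRing.Theory Num.Theory.
Local Open Scope ring_scope.

Section DirectedSheaf.
Variable R : realType.
Local Notation C := (R[i]).

Definition toC (x : R) : C := Complex x 0.
Definition mxC k l (A : 'M[R]_(k, l)) : 'M[C]_(k, l) := map_mx toC A.

Definition adjmx k l (A : 'M[C]_(k, l)) : 'M[C]_(l, k) :=
  (map_mx (fun z : C => z^*) A)^T.

Definition posdef k (A : 'M[R]_k) : Prop :=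
  A^T = A /\ forall x : 'cV[R]_k, x != 0 -> 0 < (x^T *m A *m x) 0 0.
Definition possemidef k (A : 'M[R]_k) : Prop :=
  A^T = A /\ forall x : 'cV[R]_k, 0 <= (x^T *m A *m x) 0 0.

(* complex Hermitian positive semidefinite: A^dagger = A and x^dagger A x >= 0
   (in the order of C, i.e. real and nonnegative) *)
Definition hermitian_psd k (A : 'M[C]_k) : Prop :=
  adjmx A = A /\ forall x : 'cV[C]_k, 0 <= (adjmx x *m A *m x) 0 0.

(* principal (positive semidefinite) square root of a real matrix, chosen
   classically among the symmetric PSD matrices S with S S = A
   (0 if none exists). *)
Definition psd_sqrt k (A : 'M[R]_k) : 'M[R]_k :=
  xget 0 [set S : 'M[R]_k | possemidef S /\ S *m S = A].

(* Directed hypergraph on vertices 'I_n with hyperedges 'I_m: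
   tail T e and head H e; e = T e :|: H e. *)
Variables (n m d : nat) (T H : 'I_m -> {set 'I_n}).
Variable (q : R).
Variable (F : 'I_m -> 'I_n -> 'M[R]_d).

Definition edge (e : 'I_m) : {set 'I_n} := T e :|: H e.
Definition delta (e : 'I_m) : nat := #|edge e|.

(* e^{-2 pi i q} = cos(2 pi q) - i sin(2 pi q) *)
Definition phase : C := Complex (cos (2 * pi * q)) (- sin (2 * pi * q)).

Definition Sq (e : 'I_m) (u : 'I_n) : C :=
  if u \in H e then 1 else if u \in T e then phase else 0.

Definition Fvec (e : 'I_m) (u : 'I_n) : 'M[C]_d := Sq e u *: mxC (F e u).

Definition Bq : 'M[C]_(\sum_(e < m) d, \sum_(u < n) d) :=
  \mxblock_(e < m, u < n) (if u \in edge e then Fvec e u else 0).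

Definition DE : 'M[C]_(\sum_(e < m) d) :=
  \mxdiag_(e < m) ((delta e)%:R%:M : 'M[C]_d).

Definition Du (u : 'I_n) : 'M[R]_d :=
  \sum_(e < m | u \in edge e) (F e u)^T *m F e u.

Definition DV : 'M[R]_(\sum_(u < n) d) := \mxdiag_(u < n) Du u.

Definition sheafLap : 'M[C]_(\sum_(u < n) d) :=
  mxC DV - adjmx Bq *m invmx DE *m Bq.

Definition DV_invsqrt : 'M[R]_(\sum_(u < n) d) := invmx (psd_sqrt DV).

Definition sheafLapN : 'M[C]_(\sum_(u < n) d) :=
  mxC DV_invsqrt *m sheafLap *m mxC DV_invsqrt.

End DirectedSheaf.

(* Main.v *)
Require Import Defs.
From HB Require Import structures.
From mathcomp Require Import all_boot all_order all_algebra.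
From mathcomp Require Import complex.
From mathcomp Require Import boolp classical_sets reals trigo.
From mathcomp Require Import ring lra.
Import Order.TTheory GRing.Theory Num.Theory.
Local Open Scope ring_scope.
Section S.
Variable R : realType.
Local Notation C := (R[i]).

Lemma adjmx_mul k l p (A : 'M[C]_(k, l)) (B : 'M[C]_(l, p)) :
  adjmx (A *m B) = adjmx B *m adjmx A.
Proof. by rewrite /adjmx map_mxM trmx_mul. Qed.

Lemma adjmxD k l (A B : 'M[C]_(k, l)) : adjmx (A + B) = adjmx A + adjmx B.
Proof. by rewrite /adjmx map_mxD linearD. Qed.
Lemma adjmxB k l (A B : 'M[C]_(k, l)) : adjmx (A - B) = adjmx A - adjmx B.
Proof. by rewrite /adjmx map_mxB linearB. Qed.
Lemma adjmx_sum k l (I : finType) (P : pred I) (A : I -> 'M[C]_(k, l)) :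
  adjmx (\sum_(i | P i) A i) = \sum_(i | P i) adjmx (A i).
Proof.
apply/matrixP => i j; rewrite !mxE !summxE rmorph_sum /=.
by apply: eq_bigr => a _; rewrite !mxE.
Qed.

Lemma adjmxK k l (A : 'M[C]_(k, l)) : adjmx (adjmx A) = A.
Proof. by apply/matrixP => i j; rewrite !mxE conjCK. Qed.

Lemma conj_toC (x : R) : (toC x)^* = toC x.
Proof. by apply: conj_Creal; rewrite /toC complex_real. Qed.

Lemma mxCE k l (A : 'M[R]_(k, l)) : mxC A = map_mx (real_complex R) A.
Proof. by []. Qed.

Lemma adjmx_mxC k l (A : 'M[R]_(k, l)) : adjmx (mxC A) = mxC A^T.
Proof. by apply/matrixP => i j; rewrite !mxE conj_toC. Qed.

Lemma adjmx_mxcol (p : nat) (p_ : 'I_p -> nat) k (X : forall i, 'M[C]_(p_ i, k)) :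
  adjmx (\mxcol_i X i) = \mxrow_i adjmx (X i).
Proof. by apply/matrixP => i j; rewrite !mxE. Qed.

Lemma map_mxdiag (V W : nmodType) (p : nat) (p_ : 'I_p -> nat) (f : {additive V -> W}) (D : forall i, 'M[V]_(p_ i)) :
  map_mx f (\mxdiag_i D i) = \mxdiag_i map_mx f (D i).
Proof.
apply/matrixP => i j; rewrite /mxdiag !mxE.
case: ifP => _; last by rewrite !mxE raddf0.
by rewrite -[in RHS](map_mx0 f) -map_conform_mx mxE.
Qed.

Lemma mul_mxdiag (p : nat) (p_ : 'I_p -> nat) (A B : forall i, 'M[C]_(p_ i)) :
  \mxdiag_i A i *m \mxdiag_i B i = \mxdiag_i (A i *m B i).
Proof.
rewrite {1}/mxdiag mul_mxblock_mxdiag /mxdiag; apply: eq_mxblock => i j.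
case: eqP => [->|_]; last by rewrite mul0mx.
by rewrite !conform_mx_id.
Qed.

Lemma ip_ge0 k (a : 'cV[C]_k) : 0 <= (adjmx a *m a) 0 0.
Proof.
rewrite mxE; apply: sumr_ge0 => i _; rewrite !mxE mulrC; exact: mul_conjC_ge0.
Qed.

Lemma phase_norm (q : R) : (phase q)^* * phase q = 1.
Proof.
rewrite -normCKC normc_def /phase /= sqrrN cos2Dsin2 sqrtr1.
by rewrite expr1n.
Qed.


Definition ip k (a b : 'cV[C]_k) : C := (adjmx a *m b) 0 0.
Arguments ip {k}.

Lemma ipBl k (a b c : 'cV[C]_k) : ip (a - b) c = ip a c - ip b c.
Proof. by rewrite /ip adjmxB mulmxBl mxE [X in _ + X]mxE. Qed.
Lemma ipBr k (a b c : 'cV[C]_k) : ip a (b - c) = ip a b - ip a c.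
Proof. by rewrite /ip mulmxBr mxE [X in _ + X]mxE. Qed.
Lemma ip_suml k (I : finType) (P : pred I) (a : I -> 'cV[C]_k) b :
  ip (\sum_(i | P i) a i) b = \sum_(i | P i) ip (a i) b.
Proof. by rewrite /ip adjmx_sum mulmx_suml summxE. Qed.
Lemma ip_sumr k (I : finType) (P : pred I) (a : I -> 'cV[C]_k) b :
  ip b (\sum_(i | P i) a i) = \sum_(i | P i) ip b (a i).
Proof. by rewrite /ip mulmx_sumr summxE. Qed.
Lemma cs_ineq k (I : finType) (S : {set I}) (z : I -> 'cV[C]_k) :
  (0 < #|S|)%N ->
  0 <= \sum_(u in S) ip (z u) (z u) - (#|S|%:R)^-1 * ip (\sum_(u in S) z u) (\sum_(u in S) z u).
Proof.
move=> S0; set a := \sum_(u in S) _; set b := ip _ _.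
have key : \sum_(u in S) \sum_(v in S) ip (z u - z v) (z u - z v) = 2%:R * (#|S|%:R * a - b).
  have -> : b = \sum_(u in S) \sum_(v in S) ip (z u) (z v).
    by rewrite /b ip_suml; apply: eq_bigr => u _; rewrite ip_sumr.
  have hb : \sum_(u in S) \sum_(v in S) ip (z v) (z u) = \sum_(u in S) \sum_(v in S) ip (z u) (z v).
    by rewrite exchange_big.
  transitivity (\sum_(u in S) \sum_(v in S) (ip (z u) (z u) + ip (z v) (z v)) -
     (\sum_(u in S) \sum_(v in S) ip (z u) (z v) + \sum_(u in S) \sum_(v in S) ip (z v) (z u))).
    rewrite -big_split -sumrB; apply: eq_bigr => u _.
    rewrite -big_split -sumrB; apply: eq_bigr => v _.
    rewrite /= !ipBl !ipBr.
    move: (ip (z u) (z u)) (ip (z u) (z v)) (ip (z v) (z u)) (ip (z v) (z v)) => p1 p2 p3 p4.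
    ring.
  have e2 : \sum_(u in S) \sum_(v in S) (ip (z u) (z u) + ip (z v) (z v)) = a *+ #|S| + a *+ #|S|.
    under eq_bigr do rewrite big_split sumr_const.
    rewrite big_split sumr_const sumrMnl.
    by [].
  transitivity ((a *+ #|S| + a *+ #|S|) - (\sum_(u in S) \sum_(v in S) ip (z u) (z v) + \sum_(u in S) \sum_(v in S) ip (z u) (z v))).
    by congr (_ - (_ + _)); [exact: e2 | exact: hb].
  set s := \sum_(u in S) \sum_(v in S) ip (z u) (z v).
  clearbody s a; rewrite -[a *+ #|S|]mulr_natl.
  move: (#|S|%:R * a) => t.
  by rewrite (mulr_natl (t - s) 2) mulr2n opprD addrACA.
have h2 : 0 <= #|S|%:R * a - b.
  have : 0 <= 2%:R * (#|S|%:R * a - b).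
    rewrite -key; apply: sumr_ge0 => u _; apply: sumr_ge0 => v _; exact: ip_ge0.
  by rewrite pmulr_rge0 // ltr0n.
have nz : (#|S|%:R : C) != 0 by rewrite pnatr_eq0 -lt0n.
have -> : a - (#|S|%:R)^-1 * b = (#|S|%:R)^-1 * (#|S|%:R * a - b).
  by rewrite mulrBr mulrA mulVf // mul1r.
by rewrite mulr_ge0 // invr_ge0 ler0n.
Qed.

Lemma adjmx_scale k l (a : C) (A : 'M[C]_(k, l)) : adjmx (a *: A) = a^* *: adjmx A.
Proof. by apply/matrixP => i j; rewrite !mxE rmorphM. Qed.

Lemma adjmx_mxdiag (p : nat) (p_ : 'I_p -> nat) (D : forall i, 'M[C]_(p_ i)) :
  adjmx (\mxdiag_i D i) = \mxdiag_i adjmx (D i).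
Proof. by rewrite /adjmx (@map_mxdiag C C _ _ Num.conj) tr_mxdiag. Qed.

Lemma entryB (A B : 'M[C]_1) c : (A - c *: B) 0 0 = A 0 0 - c * B 0 0.
Proof. by rewrite !mxE. Qed.

Section Main.
Variables (n m d : nat) (T H : 'I_m -> {set 'I_n}) (q : R) (F : 'I_m -> 'I_n -> 'M[R]_d).
Local Notation N := (\sum_(u < n) d)%N.
Local Notation L := (sheafLap T H q F).
Local Notation E := (edge T H).
Definition cE (e : 'I_m) : C := ((delta T H e)%:R)^-1.

Lemma DV_sym : (DV T H F)^T = DV T H F.
Proof.
rewrite /DV tr_mxdiag; apply: eq_mxdiag => u; rewrite /Du raddf_sum /=.
by apply: eq_bigr => e _; rewrite trmx_mul trmxK.
Qed.

Hypothesis hE : forall e, (0 < delta T H e)%N.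

Lemma invDE : invmx (DE R d T H) = \mxdiag_(e < m) ((cE e)%:M : 'M[C]_d).
Proof.
set D' := mxdiag _.
have h : DE R d T H *m D' = 1%:M.
  rewrite /DE /D' mul_mxdiag -(mxdiagZ (p_ := fun _ : 'I_m => d) (1 : C)).
  apply: eq_mxdiag => e; by rewrite -scalar_mxM /cE mulfV // pnatr_eq0 -lt0n hE.
have [U _] := mulmx1_unit h.
by rewrite -[RHS](mulKmx U D') h mulmx1.
Qed.

Lemma adj_D' : adjmx (\mxdiag_(e < m) ((cE e)%:M : 'M[C]_d)) = \mxdiag_(e < m) ((cE e)%:M : 'M[C]_d).
Proof.
rewrite adjmx_mxdiag; apply: eq_mxdiag => e; apply/matrixP => i j.
by rewrite !mxE rmorphMn /= /cE fmorphV /= conjC_nat eq_sym.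
Qed.

Lemma L_herm : adjmx L = L.
Proof.
by rewrite /sheafLap adjmxB !adjmx_mul adjmxK adjmx_mxC DV_sym invDE adj_D' mulmxA.
Qed.


Lemma Sq_norm e u : u \in E e -> (Sq T H q e u)^* * Sq T H q e u = 1.
Proof.
rewrite /Sq /edge finset.in_setU => hu; case: ifP => hH; first by rewrite conjC1 mulr1.
case: ifP => hT; first exact: phase_norm.
by move: hu; rewrite hH hT.
Qed.

Lemma adjFF e u : u \in E e ->
  adjmx (Fvec T H q F e u) *m Fvec T H q F e u = mxC (F e u)^T *m mxC (F e u).
Proof.
move=> hu; rewrite /Fvec adjmx_scale adjmx_mxC -scalemxAl -scalemxAr scalerA.
by rewrite Sq_norm // scale1r.
Qed.

Section Quad.
Variable x : 'cV[C]_N.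
Definition xs (u : 'I_n) : 'cV[C]_d := submxcol x u.
Definition zv e u : 'cV[C]_d := Fvec T H q F e u *m xs u.
Definition yv e : 'cV[C]_d := \sum_u (if u \in E e then Fvec T H q F e u else 0) *m xs u.

Lemma step1 : adjmx x *m mxC (DV T H F) *m x =
   \sum_u adjmx (xs u) *m mxC (Du T H F u) *m xs u.
Proof.
rewrite -[in LHS](submxcolK x) adjmx_mxcol /DV mxCE map_mxdiag mul_mxrow_mxdiag.
by rewrite mul_mxrow_mxcol.
Qed.

Lemma step2 : Bq T H q F *m x = \mxcol_e yv e.
Proof. by rewrite -[in LHS](submxcolK x) /Bq mul_mxblock_mxrow. Qed.

Lemma step3 : adjmx x *m (adjmx (Bq T H q F) *m invmx (DE R d T H) *m Bq T H q F) *m x =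
  \sum_e cE e *: (adjmx (yv e) *m yv e).
Proof.
have -> : adjmx x *m (adjmx (Bq T H q F) *m invmx (DE R d T H) *m Bq T H q F) *m x =
   adjmx (Bq T H q F *m x) *m invmx (DE R d T H) *m (Bq T H q F *m x).
  by rewrite adjmx_mul !mulmxA.
rewrite step2 invDE adjmx_mxcol mul_mxrow_mxdiag mul_mxrow_mxcol.
by apply: eq_bigr => e _; rewrite mul_mx_scalar scalemxAl.
Qed.

Lemma step4 : \sum_u adjmx (xs u) *m mxC (Du T H F u) *m xs u =
   \sum_e \sum_(u in E e) adjmx (zv e u) *m zv e u.
Proof.
transitivity (\sum_u \sum_(e | u \in E e) adjmx (zv e u) *m zv e u).
  apply: eq_bigr => u _.
  rewrite /Du mxCE map_mx_sum mulmx_sumr mulmx_suml; apply: eq_bigr => e he.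
  rewrite /zv adjmx_mul -!mulmxA (mulmxA (adjmx (Fvec T H q F e u))) adjFF //.
  by rewrite map_mxM.
by rewrite (exchange_big_dep predT).
Qed.

Lemma step5 e : yv e = \sum_(u in E e) zv e u.
Proof.
rewrite /yv [RHS]big_mkcond; apply: eq_bigr => u _.
by case: ifP => _; rewrite ?mul0mx.
Qed.

Lemma L_psd : 0 <= (adjmx x *m L *m x) 0 0.
Proof.
rewrite /sheafLap mulmxBr mulmxBl step1 step3 step4 -sumrB summxE.
apply: sumr_ge0 => e _; rewrite entryB summxE step5.
exact: (cs_ineq _ _ (E e) (zv e) (hE e)).
Qed.
End Quad.

Lemma sqrt_sym : (psd_sqrt (DV T H F))^T = psd_sqrt (DV T H F).
Proof.
rewrite /psd_sqrt; case: xgetP => [S _ [[-> _] _]|_]; first by [].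
by rewrite trmx0.
Qed.

Lemma invsqrt_sym : (DV_invsqrt T H F)^T = DV_invsqrt T H F.
Proof. by rewrite /DV_invsqrt trmx_inv sqrt_sym. Qed.

Lemma LN_psd : hermitian_psd (sheafLapN T H q F).
Proof.
rewrite /hermitian_psd /sheafLapN; set X := mxC _; split.
  by rewrite !adjmx_mul L_herm /X adjmx_mxC invsqrt_sym mulmxA.
move=> x; have -> : adjmx x *m (X *m L *m X) *m x = adjmx (X *m x) *m L *m (X *m x).
  by rewrite adjmx_mul /X adjmx_mxC invsqrt_sym !mulmxA.
exact: L_psd.
Qed.
End Main.
End S.

Theorem corollary1 (R : realType) (n m d : nat) (T H : 'I_m -> {set 'I_n})
    (q : R) (F : 'I_m -> 'I_n -> 'M[R]_d) :
  (forall e, [disjoint T e & H e]) ->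
  (forall e, edge T H e != finset.set0) ->
  (forall u, posdef (Du T H F u)) ->
  hermitian_psd (sheafLapN T H q F).
Proof.
move=> _ hne _; apply: LN_psd => e.
by rewrite /delta card_gt0.
Qed.
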